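(* Let $\{(\Gamma_t,\theta_t)\}_{t\in[0,\underline t)}$ solve the framed curvature flow. Then $$\frac{d}{dt}L(\Gamma_t)=-\int_{\Gamma_t}\kappa\psi_1\,ds,\qquad \frac{d}{dt}A(\Sigma_t)=\int_{\Gamma_t}\kappa\,ds .$$
   Context: $S^1=\mathbb{R}/2\pi\mathbb{Z}$; closed curves $\Gamma_t$ parametrized by $\gamma(t,\cdot):S^1\to\mathbb{R}^3$, $g=\|\partial_u\gamma\|$, $ds=g\,du$, $\partial_s=g^{-1}\partial_u$, $L(\Gamma_t)$ length; Frenet frame $T,N,B$, curvature $\kappa$; angle function $\theta$, $\nu_\theta=\cos\theta N+\sin\theta B$, $\psi_1=\kappa\cos\theta$. Framed curvature flow: $\partial_t\gamma=\kappa\nu_\theta$, $\partial_t\theta=\upsilon_\theta$ with some $\upsilon_\theta\in\mathcal C^1$. The trajectory surface $\Sigma_t=\bigcup_{t'\in[0,t)}\Gamma_{t'}$ is parametrized by $(t',u)\mapsto\gamma(t',u)$, and $A(\Sigma_t)=\int_0^t\int_{S^1}g\,\kappa\,du\,dt'$ is its area. *)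

(* Defs.v *)
From Stdlib Require Import Reals.
From Coquelicot Require Import Coquelicot.
Open Scope R_scope.

Definition V3 := (R * R * R)%type.
Definition mkV (a b c : R) : V3 := (a, b, c).
Definition v1 (v : V3) : R := fst (fst v).
Definition v2 (v : V3) : R := snd (fst v).
Definition v3 (v : V3) : R := snd v.
Definition vadd (v w : V3) : V3 := mkV (v1 v + v1 w) (v2 v + v2 w) (v3 v + v3 w).
Definition vscal (a : R) (v : V3) : V3 := mkV (a * v1 v) (a * v2 v) (a * v3 v).
Definition vdot (v w : V3) : R := v1 v * v1 w + v2 v * v2 w + v3 v * v3 w.
Definition vcross (v w : V3) : V3 :=
  mkV (v2 v * v3 w - v3 v * v2 w) (v3 v * v1 w - v1 v * v3 w) (v1 v * v2 w - v2 v * v1 w).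
Definition vnorm (v : V3) : R := sqrt (vdot v v).

Definition Dt (f : R -> R -> R) : R -> R -> R :=
  fun t u => Derive (fun t' => f t' u) t.
Definition Du (f : R -> R -> R) : R -> R -> R :=
  fun t u => Derive (fun u' => f t u') u.
Fixpoint DtN (i : nat) (f : R -> R -> R) : R -> R -> R :=
  match i with O => f | S i => Dt (DtN i f) end.
Fixpoint DuN (j : nat) (f : R -> R -> R) : R -> R -> R :=
  match j with O => f | S j => Du (DuN j f) end.

Definition DtV (g : R -> R -> V3) : R -> R -> V3 :=
  fun t u => mkV (Dt (fun t u => v1 (g t u)) t u) (Dt (fun t u => v2 (g t u)) t u)
                 (Dt (fun t u => v3 (g t u)) t u).
Definition DuV (g : R -> R -> V3) : R -> R -> V3 :=
  fun t u => mkV (Du (fun t u => v1 (g t u)) t u) (Du (fun t u => v2 (g t u)) t u)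
                 (Du (fun t u => v3 (g t u)) t u).

Definition inI (tbar : Rbar) (t : R) : Prop := 0 <= t /\ Rbar_lt t tbar.
Definition inIo (tbar : Rbar) (t : R) : Prop := 0 < t /\ Rbar_lt t tbar.

Definition unc (f : R -> R -> R) : R * R -> R := fun p => f (fst p) (snd p).

Definition smooth_on (tbar : Rbar) (f : R -> R -> R) : Prop :=
  (forall i j t u, inIo tbar t ->
     ex_derive (fun t' => DtN i (DuN j f) t' u) t /\
     ex_derive (fun u' => DtN i (DuN j f) t u') u /\
     continuous (unc (DtN i (DuN j f))) (t, u)) /\
  (forall j t u, inI tbar t ->
     ex_derive (fun u' => DuN j f t u') u /\
     filterlim (unc (DuN j f)) (within (fun p : R * R => 0 <= fst p) (locally (t, u)))
               (locally (DuN j f t u))).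

Definition smoothV_on (tbar : Rbar) (g : R -> R -> V3) : Prop :=
  smooth_on tbar (fun t u => v1 (g t u)) /\ smooth_on tbar (fun t u => v2 (g t u)) /\
  smooth_on tbar (fun t u => v3 (g t u)).

Definition C1_on (tbar : Rbar) (f : R -> R -> R) : Prop :=
  forall t u, inIo tbar t ->
    ex_derive (fun t' => f t' u) t /\ ex_derive (fun u' => f t u') u /\
    continuous (unc f) (t, u) /\ continuous (unc (Dt f)) (t, u) /\
    continuous (unc (Du f)) (t, u).

Section Geom.
Variable gamma : R -> R -> V3.
Definition gfac (t u : R) : R := vnorm (DuV gamma t u).
Definition Tan (t u : R) : V3 := vscal (/ gfac t u) (DuV gamma t u).
Definition dsTan (t u : R) : V3 := vscal (/ gfac t u) (DuV Tan t u).
Definition kappa (t u : R) : R := vnorm (dsTan t u).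
Definition Nor (t u : R) : V3 := vscal (/ kappa t u) (dsTan t u).
Definition Bin (t u : R) : V3 := vcross (Tan t u) (Nor t u).
Definition nu_theta (theta : R -> R -> R) (t u : R) : V3 :=
  vadd (vscal (cos (theta t u)) (Nor t u)) (vscal (sin (theta t u)) (Bin t u)).
Definition psi1 (theta : R -> R -> R) (t u : R) : R := kappa t u * cos (theta t u).
Definition curve_length (t : R) : R := RInt (fun u => gfac t u) 0 (2 * PI).
Definition traj_area (t : R) : R :=
  RInt (fun t' => RInt (fun u => gfac t' u * kappa t' u) 0 (2 * PI)) 0 t.
End Geom.

Definition framed_curvature_flow (tbar : Rbar) (gamma : R -> R -> V3)
    (theta : R -> R -> R) : Prop :=
  (forall t u, inI tbar t -> gamma t (u + 2 * PI) = gamma t u) /\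
  smoothV_on tbar gamma /\
  (* regular, with nonvanishing curvature so the Frenet frame exists *)
  (forall t u, inI tbar t -> 0 < gfac gamma t u) /\
  (forall t u, inI tbar t -> 0 < kappa gamma t u) /\
  (forall t u, inIo tbar t -> ex_derive (fun t' => theta t' u) t) /\
  (forall t u, inIo tbar t -> continuous (unc theta) (t, u)) /\
  C1_on tbar (Dt theta) /\
  (forall t u, inIo tbar t ->
     DtV gamma t u = vscal (kappa gamma t u) (nu_theta gamma theta t u)).

(* Main.v *)
Require Import Defs.
From Stdlib Require Import Reals.
From Coquelicot Require Import Coquelicot.
From Stdlib Require Import Lra Psatz.
Open Scope R_scope.

Lemma c2d_of_unc (f : R -> R -> R) t u :
  continuous (unc f) (t, u) -> continuity_2d_pt f t u.
Proof. intros H. apply continuity_2d_pt_filterlim. exact H. Qed.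

Lemma c2d_slice (f : R -> R -> R) x y :
  continuity_2d_pt f x y -> continuity_pt (f x) y.
Proof.
  intros H eps Heps. destruct (H (mkposreal eps Heps)) as [d Hd].
  exists d. split. apply cond_pos. intros z [_ Hz].
  simpl in *. unfold R_dist in *. apply Hd. rewrite Rminus_eq_0, Rabs_R0. apply cond_pos. exact Hz.
Qed.

Lemma c2d_sqrt (f : R -> R -> R) x y :
  continuity_2d_pt f x y -> continuity_2d_pt (fun a b => sqrt (f a b)) x y.
Proof.
  intros H. apply continuity_2d_pt_filterlim in H. apply continuity_2d_pt_filterlim.
  eapply filterlim_comp. exact H. apply continuous_sqrt.
Qed.

Lemma c2d_max (F : R -> R -> R) s u :
  filterlim (unc F) (within (fun p : R * R => 0 <= fst p) (locally (Rmax 0 s, u)))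
     (locally (F (Rmax 0 s) u)) ->
  continuity_2d_pt (fun a b => F (Rmax 0 a) b) s u.
Proof.
  intros H eps. apply filterlim_locally with (eps := eps) in H.
  destruct H as [d Hd]. exists d. intros a b Ha Hb.
  assert (HH := Hd (Rmax 0 a, b)). simpl in HH. apply HH.
  - split.
    + change (Rabs (Rmax 0 a - Rmax 0 s) < d).
      unfold Rmax; destruct (Rle_dec 0 a); destruct (Rle_dec 0 s);
        unfold Rabs in *; repeat destruct Rcase_abs; lra.
    + exact Hb.
  - apply Rmax_l.
Qed.

Lemma ball_R (x y e : R) : ball x e y <-> Rabs (y - x) < e.
Proof. reflexivity. Qed.

Lemma exRInt_c2d (f : R -> R -> R) s a b : a <= b ->
  (forall u, a <= u <= b -> continuity_2d_pt f s u) -> ex_RInt (f s) a b.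
Proof.
  intros Hab H. apply (ex_RInt_continuous (V:=R_CompleteNormedModule)). intros z Hz.
  rewrite Rmin_left, Rmax_right in Hz by lra.
  apply continuity_pt_filterlim. apply c2d_slice. apply H; lra.
Qed.

Lemma param_cont (f : R -> R -> R) s0 a b : a < b ->
  locally s0 (fun s => forall u, a <= u <= b -> continuity_2d_pt f s u) ->
  continuity_pt (fun s => RInt (f s) a b) s0.
Proof.
  intros Hab Hloc eps Heps.
  assert (He' : 0 < eps / (2 * (b - a))).
  { apply Rdiv_lt_0_compat; lra. }
  destruct Hloc as [d2 Hd2].
  assert (H0 : forall u, a <= u <= b -> continuity_2d_pt f s0 u).
  { apply Hd2. apply ball_center. }
  destruct (uniform_continuity_2d_1d' f a b s0 H0 (mkposreal _ He')) as [d Hd].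
  exists (Rmin d d2). split. apply Rmin_pos; apply cond_pos.
  intros s [_ Hs]. simpl in Hs. unfold R_dist in Hs. simpl. unfold R_dist.
  assert (Hs1 : Rabs (s - s0) < d) by (eapply Rlt_le_trans; [exact Hs| apply Rmin_l]).
  assert (Hs2 : Rabs (s - s0) < d2) by (eapply Rlt_le_trans; [exact Hs| apply Rmin_r]).
  assert (Hcs : forall u, a <= u <= b -> continuity_2d_pt f s u) by (apply Hd2; exact Hs2).
  assert (E1 : ex_RInt (f s) a b) by (apply exRInt_c2d; auto; lra).
  assert (E0 : ex_RInt (f s0) a b) by (apply exRInt_c2d; auto; lra).
  assert (Heq : RInt (f s) a b - RInt (f s0) a b = RInt (fun u => f s u - f s0 u) a b).
  { rewrite (RInt_minus (V:=R_CompleteNormedModule)); auto. }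
  rewrite Heq.
  eapply Rle_lt_trans.
  apply abs_RInt_le_const with (M := eps / (2 * (b - a))). lra.
  apply (ex_RInt_minus (V := R_NormedModule)); auto.
  intros u Hu. left.
  apply (Hd u s0 u s Hu); try lra.
  - pose proof (cond_pos d). lra.
  - apply Rabs_lt_between' in Hs1. lra.
  - rewrite Rminus_eq_0, Rabs_R0. apply cond_pos.
  - field_simplify; lra.
Qed.

Lemma schwarz_peano (f : R -> R -> R) t u :
  (exists d0 : posreal, forall t' u', Rabs (t'-t) < d0 -> Rabs (u'-u) < d0 ->
     ex_derive (fun z => f z u') t' /\ ex_derive (fun z => f t' z) u' /\
     ex_derive (fun z => Du f z u') t') ->
  continuity_2d_pt (Dt (Du f)) t u ->
  is_derive (fun z => Dt f t z) u (Dt (Du f) t u).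
Proof.
  intros [d0 Hd0] Hc. apply is_derive_Reals. intros eps Heps.
  destruct (Hc (mkposreal (eps/2) ltac:(lra))) as [d1 Hd1]. simpl in Hd1.
  set (D := Dt (Du f) t u) in *.
  set (d := Rmin d0 d1).
  assert (Hd : 0 < d) by (apply Rmin_pos; apply cond_pos).
  assert (Hdd0 : d <= d0) by apply Rmin_l.
  assert (Hdd1 : d <= d1) by apply Rmin_r.
  exists (mkposreal d Hd). intros h Hh0 Hh. simpl in Hh.
  set (phi := fun z => f z (u + h) - f z u).
  assert (Hphi : is_derive phi t (Dt f t (u + h) - Dt f t u)).
  { apply (is_derive_minus (fun z => f z (u+h)) (fun z => f z u)).
    - apply Derive_correct. apply (Hd0 t (u+h)). rewrite Rminus_eq_0, Rabs_R0; apply cond_pos.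
      replace (u + h - u) with h by ring. lra.
    - apply Derive_correct. apply (Hd0 t u); rewrite Rminus_eq_0, Rabs_R0; apply cond_pos. }
  apply is_derive_Reals in Hphi.
  assert (Hha : 0 < Rabs h) by (apply Rabs_pos_lt; exact Hh0).
  destruct (Hphi (Rabs h * (eps / 2)) ltac:(nra)) as [dk Hdk].
  set (k := Rmin dk d / 2).
  assert (Hk : 0 < k) by (unfold k; pose proof (cond_pos dk); pose proof (Rmin_pos dk d (cond_pos dk) Hd); lra).
  assert (Hkdk : k < dk) by (unfold k; pose proof (Rmin_l dk d); pose proof (cond_pos dk); lra).
  assert (Hkd : k < d) by (unfold k; pose proof (Rmin_r dk d); lra).
  assert (Hk1 := Hdk k ltac:(lra) ltac:(rewrite Rabs_pos_eq; lra)).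
  destruct (MVT_cor4 (fun w => f (t + k) w - f t w)
              (fun w => Du f (t + k) w - Du f t w) u (Rabs h)) with (b := u + h)
    as [xi [Hxi1 Hxi2]].
  { intros c Hc0. apply (is_derive_minus (fun w => f (t+k) w) (fun w => f t w)).
    - apply Derive_correct. apply (Hd0 (t+k) c).
      replace (t + k - t) with k by ring; rewrite Rabs_pos_eq; lra. lra.
    - apply Derive_correct. apply (Hd0 t c). rewrite Rminus_eq_0, Rabs_R0; apply cond_pos. lra. }
  { replace (u + h - u) with h by ring. lra. }
  replace (u + h - u) with h in Hxi1, Hxi2 by ring.
  destruct (MVT_cor4 (fun z => Du f z xi) (fun z => Dt (Du f) z xi) t k) with (b := t + k)
    as [tau [Htau1 Htau2]].
  { intros c Hc0. apply Derive_correct. apply (Hd0 c xi). lra. lra. }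
  { replace (t + k - t) with k by ring. rewrite Rabs_pos_eq; lra. }
  replace (t + k - t) with k in Htau1, Htau2 by ring.
  assert (HE : Rabs (Dt (Du f) tau xi - D) < eps / 2).
  { apply Hd1. rewrite (Rabs_pos_eq k) in Htau2 by lra. lra. lra. }
  assert (Hq : phi (t + k) - phi t = h * k * Dt (Du f) tau xi).
  { unfold phi. 
    replace (f (t + k) (u + h) - f (t + k) u - (f t (u + h) - f t u))
      with (f (t + k) (u + h) - f t (u + h) - (f (t + k) u - f t u)) by ring.
    rewrite Hxi1. rewrite Htau1. ring. }
  set (E := Dt (Du f) tau xi) in *.
  set (P := Dt f t (u + h) - Dt f t u) in *.
  assert (Hk2 : Rabs (h * E - P) < Rabs h * (eps / 2)).
  { replace (h * E - P) with ((phi (t + k) - phi t) / k - P).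
    exact Hk1. rewrite Hq. field. lra. }
  replace (P / h - D) with ((P - h * E) / h + (E - D))
    by (field; exact Hh0).
  eapply Rle_lt_trans. apply Rabs_triang.
  unfold Rdiv. rewrite Rabs_mult, Rabs_inv. fold (Rdiv (Rabs (P - h * E)) (Rabs h)).
  replace (Rabs (P - h * E)) with (Rabs (h * E - P)) by (rewrite <- Rabs_Ropp; f_equal; ring).
  assert (Rabs (h * E - P) / Rabs h < eps / 2).
  { apply Rmult_lt_reg_l with (Rabs h). exact Hha.
    replace (Rabs h * (Rabs (h * E - P) / Rabs h)) with (Rabs (h * E - P)) by (field; lra). lra. }
  lra.
Qed.

Lemma dT1 (p1 p2 p3 q : R -> R) u :
  ex_derive p1 u -> ex_derive p2 u -> ex_derive p3 u -> ex_derive q u ->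
  0 < p1 u * p1 u + p2 u * p2 u + p3 u * p3 u ->
  is_derive (fun u' => / sqrt (p1 u' * p1 u' + p2 u' * p2 u' + p3 u' * p3 u') * q u') u
   (Derive q u / sqrt (p1 u * p1 u + p2 u * p2 u + p3 u * p3 u)
    - q u * (p1 u * Derive p1 u + p2 u * Derive p2 u + p3 u * Derive p3 u)
      / (sqrt (p1 u * p1 u + p2 u * p2 u + p3 u * p3 u) * 
         (sqrt (p1 u * p1 u + p2 u * p2 u + p3 u * p3 u) * sqrt (p1 u * p1 u + p2 u * p2 u + p3 u * p3 u)))).
Proof.
  intros H1 H2 H3 H4 Hpos.
  assert (HG : 0 < sqrt (p1 u * p1 u + p2 u * p2 u + p3 u * p3 u)) by (apply sqrt_lt_R0; auto).
  auto_derive.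
  - repeat split; auto. lra.
  - change (fun x => p1 x) with p1. change (fun x => p2 x) with p2. change (fun x => p3 x) with p3.
    change (fun x => q x) with q. field. lra.
Qed.

Lemma V3_eta (v : V3) : v = mkV (v1 v) (v2 v) (v3 v).
Proof. destruct v as [[a b] c]. reflexivity. Qed.

Lemma V3_ext (v w : V3) : v1 v = v1 w -> v2 v = v2 w -> v3 v = v3 w -> v = w.
Proof. intros. rewrite (V3_eta v), (V3_eta w). congruence. Qed.

Ltac vsimpl := unfold vdot, vscal, vadd, vcross, mkV, v1, v2, v3 in *; simpl in *.

Lemma vdot_scal_l a v w : vdot (vscal a v) w = a * vdot v w.
Proof. vsimpl. ring. Qed.
Lemma vdot_scal_r a v w : vdot v (vscal a w) = a * vdot v w.
Proof. vsimpl. ring. Qed.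
Lemma vdot_add_r v w z : vdot v (vadd w z) = vdot v w + vdot v z.
Proof. vsimpl. ring. Qed.
Lemma vdot_comm v w : vdot v w = vdot w v.
Proof. vsimpl. ring. Qed.
Lemma vdot_cross_1 a b : vdot a (vcross a b) = 0.
Proof. vsimpl. ring. Qed.
Lemma vdot_cross_2 a b : vdot b (vcross a b) = 0.
Proof. vsimpl. ring. Qed.
Lemma vdot_ge0 v : 0 <= vdot v v.
Proof. vsimpl. nra. Qed.
Lemma vnorm_sq v : vnorm v * vnorm v = vdot v v.
Proof. unfold vnorm. apply sqrt_sqrt. apply vdot_ge0. Qed.
Lemma vscal_scal a b v : vscal a (vscal b v) = vscal (a * b) v.
Proof. apply V3_ext; vsimpl; ring. Qed.
Lemma vscal_1 v : vscal 1 v = v.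
Proof. apply V3_ext; vsimpl; ring. Qed.
Lemma vnorm_scal a v : vnorm (vscal a v) = Rabs a * vnorm v.
Proof.
  unfold vnorm. rewrite vdot_scal_l, vdot_scal_r, <- Rmult_assoc.
  rewrite sqrt_mult_alt. f_equal. rewrite <- sqrt_Rsqr_abs. reflexivity.
  apply Rle_0_sqr.
Qed.

Lemma frame_facts (a D : V3) (th : R) :
  0 < vnorm a ->
  vdot (vscal (/ vnorm a) a) D = 0 ->
  0 < vnorm (vscal (/ vnorm a) D) ->
  let G := vnorm a in
  let T := vscal (/ G) a in
  let dsT := vscal (/ G) D in
  let kap := vnorm dsT in
  let N := vscal (/ kap) dsT in
  let nu := vadd (vscal (cos th) N) (vscal (sin th) (vcross T N)) in
  vdot T nu = 0 /\ vdot N nu = cos th /\ vdot D (vscal kap nu) = G * kap * kap * cos th.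
Proof.
  intros HG HTD Hk G T dsT kap N nu.
  assert (Hk0 : 0 < kap) by exact Hk. assert (HG0 : 0 < G) by exact HG.
  assert (TN : vdot T N = 0).
  { unfold N, dsT. rewrite !vdot_scal_r. fold G in HTD. unfold T. rewrite HTD. ring. }
  assert (NN : vdot N N = 1).
  { unfold N. rewrite vdot_scal_l, vdot_scal_r. rewrite <- vnorm_sq. fold kap. field. lra. }
  assert (NB : vdot N (vcross T N) = 0) by apply vdot_cross_2.
  assert (TB : vdot T (vcross T N) = 0) by apply vdot_cross_1.
  assert (Nnu : vdot N nu = cos th).
  { unfold nu. rewrite vdot_add_r, !vdot_scal_r, NN, NB. ring. }
  split; [|split].
  - unfold nu. rewrite vdot_add_r, !vdot_scal_r, TN, TB. ring.
  - exact Nnu.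
  - assert (ED : D = vscal (G * kap) N).
    { unfold N, dsT. rewrite !vscal_scal. 
      apply V3_ext; unfold vscal, v1, v2, v3, mkV; simpl; field; split; lra. }
    rewrite ED, vdot_scal_r, vdot_scal_l, Nnu. ring.
Qed.

Lemma TdotDT (a b : V3) :
  0 < vnorm a ->
  vdot (vscal (/ vnorm a) a)
    (mkV (v1 b / vnorm a - v1 a * vdot a b / (vnorm a * (vnorm a * vnorm a)))
         (v2 b / vnorm a - v2 a * vdot a b / (vnorm a * (vnorm a * vnorm a)))
         (v3 b / vnorm a - v3 a * vdot a b / (vnorm a * (vnorm a * vnorm a)))) = 0.
Proof.
  intros HG. pose proof (vnorm_sq a) as Hs.
  set (G := vnorm a) in *. 
  replace (mkV (v1 b / G - v1 a * vdot a b / (G * (G * G)))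
         (v2 b / G - v2 a * vdot a b / (G * (G * G)))
         (v3 b / G - v3 a * vdot a b / (G * (G * G))))
   with (vadd (vscal (/ G) b) (vscal (- (vdot a b) / (G * (G * G))) a)).
  2:{ apply V3_ext; vsimpl; field; lra. }
  rewrite vdot_scal_l, vdot_add_r, !vdot_scal_r, <- Hs. field. lra.
Qed.


Definition comp (k : V3 -> R) (gamma : R -> R -> V3) : R -> R -> R := fun t u => k (gamma t u).

Section Sm.
Lemma sm_S1 tbar f t u : smooth_on tbar f -> inIo tbar t -> ex_derive (fun t' => Du f t' u) t.
Proof. intros [H _] Ht. exact (proj1 (H 0%nat 1%nat t u Ht)). Qed.
Lemma sm_S2 tbar f t u : smooth_on tbar f -> inIo tbar t -> continuity_2d_pt (Du f) t u.
Proof. intros [H _] Ht. apply c2d_of_unc. exact (proj2 (proj2 (H 0%nat 1%nat t u Ht))). Qed.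
Lemma sm_S3 tbar f t u : smooth_on tbar f -> inIo tbar t -> continuity_2d_pt (Dt (Du f)) t u.
Proof. intros [H _] Ht. apply c2d_of_unc. exact (proj2 (proj2 (H 1%nat 1%nat t u Ht))). Qed.
Lemma sm_S4 tbar f t u : smooth_on tbar f -> inIo tbar t -> ex_derive (fun t' => f t' u) t.
Proof. intros [H _] Ht. exact (proj1 (H 0%nat 0%nat t u Ht)). Qed.
Lemma sm_S5a tbar f t u : smooth_on tbar f -> inI tbar t -> ex_derive (fun u' => f t u') u.
Proof. intros [_ H] Ht. exact (proj1 (H 0%nat t u Ht)). Qed.
Lemma sm_S5b tbar f t u : smooth_on tbar f -> inI tbar t -> ex_derive (fun u' => Du f t u') u.
Proof. intros [_ H] Ht. exact (proj1 (H 1%nat t u Ht)). Qed.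
Lemma sm_S6a tbar f t u : smooth_on tbar f -> inI tbar t ->
  filterlim (unc (Du f)) (within (fun p : R * R => 0 <= fst p) (locally (t, u))) (locally (Du f t u)).
Proof. intros [_ H] Ht. exact (proj2 (H 1%nat t u Ht)). Qed.
Lemma sm_S6b tbar f t u : smooth_on tbar f -> inI tbar t ->
  filterlim (unc (Du (Du f))) (within (fun p : R * R => 0 <= fst p) (locally (t, u))) (locally (Du (Du f) t u)).
Proof. intros [_ H] Ht. exact (proj2 (H 2%nat t u Ht)). Qed.
End Sm.

Lemma inIo_inI tbar t : inIo tbar t -> inI tbar t.
Proof. intros [H1 H2]. split; [lra| exact H2]. Qed.

Definition bvec gamma t u : V3 :=
  mkV (Du (Du (comp v1 gamma)) t u) (Du (Du (comp v2 gamma)) t u) (Du (Du (comp v3 gamma)) t u).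

Definition DTf (a b : V3) : V3 :=
  mkV (v1 b / vnorm a - v1 a * vdot a b / (vnorm a * (vnorm a * vnorm a)))
      (v2 b / vnorm a - v2 a * vdot a b / (vnorm a * (vnorm a * vnorm a)))
      (v3 b / vnorm a - v3 a * vdot a b / (vnorm a * (vnorm a * vnorm a))).

Lemma vdot_pos_of_sqrt x : 0 < sqrt x -> 0 < x.
Proof. intros H. destruct (Rle_lt_dec x 0) as [h|h]; auto. rewrite sqrt_neg_0 in H; lra. Qed.

Lemma Tan_comp_derive gamma t u (k : V3 -> R) :
  ex_derive (fun u' => Du (comp v1 gamma) t u') u ->
  ex_derive (fun u' => Du (comp v2 gamma) t u') u ->
  ex_derive (fun u' => Du (comp v3 gamma) t u') u ->
  (k = v1 \/ k = v2 \/ k = v3) ->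
  0 < gfac gamma t u ->
  is_derive (fun u' => k (Tan gamma t u')) u
    (k (DTf (DuV gamma t u) (bvec gamma t u))).
Proof.
  intros H1 H2 H3 Hk Hg.
  assert (Hpos : 0 < vdot (DuV gamma t u) (DuV gamma t u)) by (apply vdot_pos_of_sqrt; exact Hg).
  destruct Hk as [Hk|[Hk|Hk]]; subst k.
  - apply (dT1 (fun u' => Du (comp v1 gamma) t u') (fun u' => Du (comp v2 gamma) t u')
                (fun u' => Du (comp v3 gamma) t u') (fun u' => Du (comp v1 gamma) t u') u); auto.
  - apply (dT1 (fun u' => Du (comp v1 gamma) t u') (fun u' => Du (comp v2 gamma) t u')
                (fun u' => Du (comp v3 gamma) t u') (fun u' => Du (comp v2 gamma) t u') u); auto.
  - apply (dT1 (fun u' => Du (comp v1 gamma) t u') (fun u' => Du (comp v2 gamma) t u')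
                (fun u' => Du (comp v3 gamma) t u') (fun u' => Du (comp v3 gamma) t u') u); auto.
Qed.

Lemma v1_mkV a b c : v1 (mkV a b c) = a. Proof. reflexivity. Qed.
Lemma v2_mkV a b c : v2 (mkV a b c) = b. Proof. reflexivity. Qed.
Lemma v3_mkV a b c : v3 (mkV a b c) = c. Proof. reflexivity. Qed.

Definition uhyp gamma t u :=
  ex_derive (fun u' => Du (comp v1 gamma) t u') u /\
  ex_derive (fun u' => Du (comp v2 gamma) t u') u /\
  ex_derive (fun u' => Du (comp v3 gamma) t u') u.

Lemma DuV_Tan_eq gamma t u : uhyp gamma t u -> 0 < gfac gamma t u ->
  DuV (Tan gamma) t u = DTf (DuV gamma t u) (bvec gamma t u).
Proof.
  intros [H1 [H2 H3]] Hg. unfold DuV at 1.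
  apply V3_ext; rewrite ?v1_mkV, ?v2_mkV, ?v3_mkV; unfold Du; apply is_derive_unique;
    apply Tan_comp_derive; auto.
Qed.

Lemma geom_point gamma theta t u : uhyp gamma t u -> 0 < gfac gamma t u -> 0 < kappa gamma t u ->
  vdot (Tan gamma t u) (nu_theta gamma theta t u) = 0 /\
  vdot (Nor gamma t u) (nu_theta gamma theta t u) = cos (theta t u) /\
  vdot (DuV (Tan gamma) t u) (vscal (kappa gamma t u) (nu_theta gamma theta t u)) =
    gfac gamma t u * kappa gamma t u * kappa gamma t u * cos (theta t u).
Proof.
  intros Hu Hg Hk.
  apply (frame_facts (DuV gamma t u) (DuV (Tan gamma) t u) (theta t u)).
  - exact Hg.
  - rewrite (DuV_Tan_eq gamma t u Hu Hg). apply TdotDT. exact Hg.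
  - exact Hk.
Qed.

Lemma Io_ball tbar t : inIo tbar t -> exists d : posreal, forall t', Rabs (t' - t) < d -> inIo tbar t'.
Proof.
  intros [H1 H2]. destruct tbar as [b| |]; simpl in H2.
  - assert (Hd : 0 < Rmin t (b - t)) by (apply Rmin_pos; lra).
    exists (mkposreal _ Hd). intros t' Ht'. simpl in Ht'.
    pose proof (Rmin_l t (b - t)). pose proof (Rmin_r t (b - t)).
    apply Rabs_lt_between' in Ht'. split; simpl; lra.
  - exists (mkposreal _ H1). intros t' Ht'. simpl in Ht'.
    apply Rabs_lt_between' in Ht'. split; simpl; [lra| exact I].
  - destruct H2.
Qed.

Lemma schwarz_comp tbar f t u : smooth_on tbar f -> inIo tbar t ->
  is_derive (fun z => Dt f t z) u (Dt (Du f) t u).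
Proof.
  intros Hs Ht. apply schwarz_peano.
  - destruct (Io_ball tbar t Ht) as [d Hd]. exists d. intros t' u' Ht' _.
    specialize (Hd t' Ht'). split; [|split].
    + eapply sm_S4; eauto.
    + eapply sm_S5a; eauto. apply inIo_inI; auto.
    + eapply sm_S1; eauto.
  - eapply sm_S3; eauto.
Qed.

Definition rvec gamma t u : V3 :=
  mkV (Dt (Du (comp v1 gamma)) t u) (Dt (Du (comp v2 gamma)) t u) (Dt (Du (comp v3 gamma)) t u).

Lemma step_b tbar gamma theta t u : framed_curvature_flow tbar gamma theta -> inIo tbar t ->
  vdot (Tan gamma t u) (rvec gamma t u) =
    - (gfac gamma t u * kappa gamma t u * kappa gamma t u * cos (theta t u)).
Proof.
  intros [Hper [[Hs1 [Hs2 Hs3]] [Hg [Hk [Hth1 [Hth2 [Hth3 Hflow]]]]]]] Ht.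
  assert (HtI : inI tbar t) by (apply inIo_inI; auto).
  assert (Hu : forall z, uhyp gamma t z).
  { intros z. split; [|split]; eapply sm_S5b; eauto. }
  set (h := fun z => v1 (Tan gamma t z) * Dt (comp v1 gamma) t z +
                     v2 (Tan gamma t z) * Dt (comp v2 gamma) t z +
                     v3 (Tan gamma t z) * Dt (comp v3 gamma) t z).
  assert (Hh0 : forall z, h z = 0).
  { intros z. change (h z) with (vdot (Tan gamma t z) (DtV gamma t z)).
    rewrite Hflow by exact Ht. rewrite vdot_scal_r.
    rewrite (proj1 (geom_point gamma theta t z (Hu z) (Hg t z HtI) (Hk t z HtI))). ring. }
  assert (HT : forall k, (k = v1 \/ k = v2 \/ k = v3) ->
     is_derive (fun z => k (Tan gamma t z)) u (k (DuV (Tan gamma) t u))).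
  { intros k Hk'. rewrite (DuV_Tan_eq gamma t u (Hu u) (Hg t u HtI)).
    destruct (Hu u) as [a [b c]]. apply Tan_comp_derive; auto. }
  assert (Hd : is_derive h u
     (v1 (DuV (Tan gamma) t u) * Dt (comp v1 gamma) t u + v1 (Tan gamma t u) * Dt (Du (comp v1 gamma)) t u +
     (v2 (DuV (Tan gamma) t u) * Dt (comp v2 gamma) t u + v2 (Tan gamma t u) * Dt (Du (comp v2 gamma)) t u) +
     (v3 (DuV (Tan gamma) t u) * Dt (comp v3 gamma) t u + v3 (Tan gamma t u) * Dt (Du (comp v3 gamma)) t u))).
  { unfold h. apply @is_derive_plus. apply @is_derive_plus.
    - apply (is_derive_mult (fun z => v1 (Tan gamma t z)) (fun z => Dt (comp v1 gamma) t z)).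
      apply HT; auto. apply (schwarz_comp tbar); auto. intros; apply Rmult_comm.
    - apply (is_derive_mult (fun z => v2 (Tan gamma t z)) (fun z => Dt (comp v2 gamma) t z)).
      apply HT; auto. apply (schwarz_comp tbar); auto. intros; apply Rmult_comm.
    - apply (is_derive_mult (fun z => v3 (Tan gamma t z)) (fun z => Dt (comp v3 gamma) t z)).
      apply HT; auto. apply (schwarz_comp tbar); auto. intros; apply Rmult_comm. }
  assert (Hd0 : is_derive h u 0).
  { apply is_derive_ext with (f := fun _ => 0). intros z; rewrite Hh0; reflexivity.
    apply @is_derive_const. }
  pose proof (is_derive_unique _ _ _ Hd) as E1. pose proof (is_derive_unique _ _ _ Hd0) as E2.
  rewrite E1 in E2.
  pose proof (proj2 (proj2 (geom_point gamma theta t u (Hu u) (Hg t u HtI) (Hk t u HtI)))) as G3.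
  rewrite <- (Hflow t u Ht) in G3.
  change (vdot (DuV (Tan gamma) t u) (DtV gamma t u)) with
    (v1 (DuV (Tan gamma) t u) * Dt (comp v1 gamma) t u + v2 (DuV (Tan gamma) t u) * Dt (comp v2 gamma) t u
     + v3 (DuV (Tan gamma) t u) * Dt (comp v3 gamma) t u) in G3.
  change (vdot (Tan gamma t u) (rvec gamma t u)) with
    (v1 (Tan gamma t u) * Dt (Du (comp v1 gamma)) t u + v2 (Tan gamma t u) * Dt (Du (comp v2 gamma)) t u
     + v3 (Tan gamma t u) * Dt (Du (comp v3 gamma)) t u).
  lra.
Qed.

Lemma dG (p1 p2 p3 : R -> R) x :
  ex_derive p1 x -> ex_derive p2 x -> ex_derive p3 x ->
  0 < p1 x * p1 x + p2 x * p2 x + p3 x * p3 x ->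
  is_derive (fun z => sqrt (p1 z * p1 z + p2 z * p2 z + p3 z * p3 z)) x
    ((p1 x * Derive p1 x + p2 x * Derive p2 x + p3 x * Derive p3 x) /
       sqrt (p1 x * p1 x + p2 x * p2 x + p3 x * p3 x)).
Proof.
  intros H1 H2 H3 Hpos.
  assert (HG : 0 < sqrt (p1 x * p1 x + p2 x * p2 x + p3 x * p3 x)) by (apply sqrt_lt_R0; auto).
  auto_derive.
  - repeat split; auto.
  - change (fun x => p1 x) with p1. change (fun x => p2 x) with p2. change (fun x => p3 x) with p3.
    field. lra.
Qed.

Lemma Dt_gfac tbar gamma theta t u : framed_curvature_flow tbar gamma theta -> inIo tbar t ->
  is_derive (fun z => gfac gamma z u) t
    (- (kappa gamma t u * psi1 gamma theta t u * gfac gamma t u)).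
Proof.
  intros Hf Ht. pose proof (step_b tbar gamma theta t u Hf Ht) as Hb.
  destruct Hf as [Hper [[Hs1 [Hs2 Hs3]] [Hg [Hk _]]]].
  assert (HtI : inI tbar t) by (apply inIo_inI; auto).
  assert (Hpos : 0 < vdot (DuV gamma t u) (DuV gamma t u))
    by (apply vdot_pos_of_sqrt; exact (Hg t u HtI)).
  pose proof (dG (fun z => Du (comp v1 gamma) z u) (fun z => Du (comp v2 gamma) z u)
                 (fun z => Du (comp v3 gamma) z u) t) as D.
  assert (E : - (kappa gamma t u * psi1 gamma theta t u * gfac gamma t u) =
     vdot (DuV gamma t u) (rvec gamma t u) / gfac gamma t u).
  { unfold Tan in Hb. rewrite vdot_scal_l in Hb. unfold psi1.
    pose proof (Hg t u HtI). 
    replace (vdot (DuV gamma t u) (rvec gamma t u)) with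
       (gfac gamma t u * (/ gfac gamma t u * vdot (DuV gamma t u) (rvec gamma t u))) by (field; lra).
    rewrite Hb. field. lra. }
  rewrite E. apply D.
  - eapply sm_S1; eauto.
  - eapply sm_S1; eauto.
  - eapply sm_S1; eauto.
  - exact Hpos.
Qed.

Lemma Dt_gfac0 tbar gamma theta t u : framed_curvature_flow tbar gamma theta -> inIo tbar t ->
  is_derive (fun z => gfac gamma z u) t
    (vdot (DuV gamma t u) (rvec gamma t u) / gfac gamma t u).
Proof.
  intros Hf Ht.
  destruct Hf as [Hper [[Hs1 [Hs2 Hs3]] [Hg [Hk _]]]].
  assert (HtI : inI tbar t) by (apply inIo_inI; auto).
  assert (Hpos : 0 < vdot (DuV gamma t u) (DuV gamma t u))
    by (apply vdot_pos_of_sqrt; exact (Hg t u HtI)).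
  apply (dG (fun z => Du (comp v1 gamma) z u) (fun z => Du (comp v2 gamma) z u)
                 (fun z => Du (comp v3 gamma) z u) t).
  - eapply sm_S1; eauto.
  - eapply sm_S1; eauto.
  - eapply sm_S1; eauto.
  - exact Hpos.
Qed.

Lemma c2d_gfac tbar gamma theta t u : framed_curvature_flow tbar gamma theta -> inIo tbar t ->
  continuity_2d_pt (gfac gamma) t u.
Proof.
  intros [Hper [[Hs1 [Hs2 Hs3]] _]] Ht.
  apply (c2d_sqrt (fun a b => vdot (DuV gamma a b) (DuV gamma a b))).
  apply continuity_2d_pt_plus; [apply continuity_2d_pt_plus|];
    apply continuity_2d_pt_mult; eapply (sm_S2 tbar); eauto.
Qed.

Lemma c2d_dgfac tbar gamma theta t u : framed_curvature_flow tbar gamma theta -> inIo tbar t ->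
  continuity_2d_pt (fun a b => vdot (DuV gamma a b) (rvec gamma a b) / gfac gamma a b) t u.
Proof.
  intros Hf Ht. pose proof (c2d_gfac tbar gamma theta t u Hf Ht) as Hc.
  destruct Hf as [Hper [[Hs1 [Hs2 Hs3]] [Hg _]]].
  apply (continuity_2d_pt_mult (fun a b => vdot (DuV gamma a b) (rvec gamma a b)) (fun a b => / gfac gamma a b)).
  - apply continuity_2d_pt_plus; [apply continuity_2d_pt_plus|];
      apply continuity_2d_pt_mult; first [eapply (sm_S2 tbar); eauto | eapply (sm_S3 tbar); eauto].
  - apply continuity_2d_pt_inv. exact Hc. apply Rgt_not_eq. apply Hg. apply inIo_inI; auto.
Qed.

Lemma ball_loc (P : R -> Prop) t : (exists d : posreal, forall t', Rabs (t' - t) < d -> P t') -> locally t P.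
Proof. intros [d Hd]. exists d. intros y Hy. apply Hd. exact Hy. Qed.

Lemma length_part tbar gamma theta t : framed_curvature_flow tbar gamma theta -> inIo tbar t ->
  is_derive (curve_length gamma) t
      (- RInt (fun u => kappa gamma t u * psi1 gamma theta t u * gfac gamma t u) 0 (2 * PI)).
Proof.
  intros Hf Ht.
  assert (HPI : 0 < 2 * PI) by (pose proof PI_RGT_0; lra).
  destruct (Io_ball tbar t Ht) as [d Hd].
  assert (HDer : forall t', inIo tbar t' -> forall u,
     Derive (fun z => gfac gamma z u) t' = vdot (DuV gamma t' u) (rvec gamma t' u) / gfac gamma t' u).
  { intros t' Ht' u. apply is_derive_unique. eapply Dt_gfac0; eauto. }
  assert (Hc : forall u, continuity_2d_pt (fun a b => Derive (fun z => gfac gamma z b) a) t u).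
  { intros u. apply continuity_2d_pt_ext_loc with
      (f := fun a b => vdot (DuV gamma a b) (rvec gamma a b) / gfac gamma a b).
    - exists d. intros a b Ha _. rewrite HDer; auto.
    - eapply c2d_dgfac; eauto. }
  pose proof (is_derive_RInt_param (gfac gamma) 0 (2 * PI) t) as P.
  unfold curve_length.
  assert (Hex : ex_RInt (fun u => Derive (fun z => gfac gamma z u) t) 0 (2 * PI)).
  { apply (exRInt_c2d (fun a b => Derive (fun z => gfac gamma z b) a)). lra. intros; apply Hc. }
  assert (HEq : forall u, Derive (fun z => gfac gamma z u) t =
         - (kappa gamma t u * psi1 gamma theta t u * gfac gamma t u)).
  { intros u. apply is_derive_unique. eapply Dt_gfac; eauto. }
  assert (HV : RInt (fun u => Derive (fun z => gfac gamma z u) t) 0 (2 * PI) =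
     - RInt (fun u => kappa gamma t u * psi1 gamma theta t u * gfac gamma t u) 0 (2 * PI)).
  { assert (Hex2 : ex_RInt (fun u => kappa gamma t u * psi1 gamma theta t u * gfac gamma t u) 0 (2 * PI)).
    { apply ex_RInt_ext with (f := fun u => opp (Derive (fun z => gfac gamma z u) t)).
      intros x _. rewrite HEq. unfold opp; simpl; ring.
      apply (ex_RInt_opp (V := R_CompleteNormedModule)). exact Hex. }
    rewrite (RInt_ext _ (fun u => opp (kappa gamma t u * psi1 gamma theta t u * gfac gamma t u))).
    rewrite (RInt_opp (V := R_CompleteNormedModule)). reflexivity. exact Hex2.
    intros x _. rewrite HEq. reflexivity. }
  rewrite <- HV. apply P.
  - apply ball_loc. exists d. intros t' Ht' u _. eexists. eapply Dt_gfac0; eauto.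
  - intros u _. apply Hc.
  - apply ball_loc. exists d. intros t' Ht'. apply (exRInt_c2d (gfac gamma)). lra.
    intros u _. eapply c2d_gfac; eauto.
Qed.

Lemma c2d_Phi (a1 a2 a3 b1 b2 b3 : R -> R -> R) x y :
  continuity_2d_pt a1 x y -> continuity_2d_pt a2 x y -> continuity_2d_pt a3 x y ->
  continuity_2d_pt b1 x y -> continuity_2d_pt b2 x y -> continuity_2d_pt b3 x y ->
  0 < a1 x y * a1 x y + a2 x y * a2 x y + a3 x y * a3 x y ->
  continuity_2d_pt (fun s u => vnorm (DTf (mkV (a1 s u) (a2 s u) (a3 s u)) (mkV (b1 s u) (b2 s u) (b3 s u)))) x y.
Proof.
  intros A1 A2 A3 B1 B2 B3 Hpos.
  assert (HG : 0 < sqrt (a1 x y * a1 x y + a2 x y * a2 x y + a3 x y * a3 x y)) by (apply sqrt_lt_R0; auto).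
  unfold vnorm, DTf, vdot, v1, v2, v3, mkV, Rdiv, Rminus. simpl. unfold vnorm, vdot; simpl.
  repeat first [ apply c2d_sqrt | apply continuity_2d_pt_plus | apply continuity_2d_pt_opp
               | apply continuity_2d_pt_mult | apply continuity_2d_pt_inv | assumption ].
  all: try (apply Rgt_not_eq; apply sqrt_lt_R0; exact Hpos).
  all: try (apply Rgt_not_eq; apply Rmult_lt_0_compat; [exact HG| apply Rmult_lt_0_compat; exact HG]).
Qed.

Definition Phi gamma s u := vnorm (DTf (DuV gamma s u) (bvec gamma s u)).
Definition Hm gamma s u := Phi gamma (Rmax 0 s) u.

Lemma Phi_eq tbar gamma theta s u : framed_curvature_flow tbar gamma theta -> inI tbar s ->
  gfac gamma s u * kappa gamma s u = Phi gamma s u.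
Proof.
  intros [Hper [[Hs1 [Hs2 Hs3]] [Hg _]]] Hs.
  assert (Hu : uhyp gamma s u) by (split; [|split]; eapply sm_S5b; eauto).
  pose proof (Hg s u Hs) as G.
  unfold kappa, dsTan. rewrite vnorm_scal, (DuV_Tan_eq gamma s u Hu G).
  rewrite Rabs_pos_eq by (left; apply Rinv_0_lt_compat; exact G).
  unfold Phi. field. lra.
Qed.

Lemma Rbar_lt_le (z x : R) (tbar : Rbar) : z <= x -> Rbar_lt x tbar -> Rbar_lt z tbar.
Proof. destruct tbar; simpl; auto; lra. Qed.

Lemma Rbar_lt_ball (s : R) (tbar : Rbar) : Rbar_lt s tbar -> exists d : posreal, forall s', Rabs (s' - s) < d -> Rbar_lt s' tbar.
Proof.
  destruct tbar as [b| |]; simpl; intros H.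
  - change (s < b) in H. assert (Hd : 0 < b - s) by lra. exists (mkposreal _ Hd). intros s' Hs'. simpl in Hs'.
    apply Rabs_lt_between' in Hs'. change (s' < b). lra.
  - exists (mkposreal 1 Rlt_0_1). auto.
  - destruct H.
Qed.

Lemma c2d_Hm (tbar : Rbar) gamma theta (s u : R) : framed_curvature_flow tbar gamma theta -> Rbar_lt 0 tbar ->
  Rbar_lt s tbar -> continuity_2d_pt (Hm gamma) s u.
Proof.
  intros Hf H0 Hs.
  assert (HI : inI tbar (Rmax 0 s)).
  { split. apply Rmax_l. unfold Rmax; destruct Rle_dec; auto. }
  destruct Hf as [Hper [[Hs1 [Hs2 Hs3]] [Hg _]]].
  unfold Hm, Phi.
  apply (c2d_Phi (fun a b => Du (comp v1 gamma) (Rmax 0 a) b) (fun a b => Du (comp v2 gamma) (Rmax 0 a) b)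
                 (fun a b => Du (comp v3 gamma) (Rmax 0 a) b)
                 (fun a b => Du (Du (comp v1 gamma)) (Rmax 0 a) b) (fun a b => Du (Du (comp v2 gamma)) (Rmax 0 a) b)
                 (fun a b => Du (Du (comp v3 gamma)) (Rmax 0 a) b)).
  1-3: apply c2d_max; eapply (sm_S6a tbar); eauto.
  1-3: apply c2d_max; eapply (sm_S6b tbar); eauto.
  apply vdot_pos_of_sqrt. exact (Hg _ u HI).
Qed.

Lemma area_part tbar gamma theta t : framed_curvature_flow tbar gamma theta -> inIo tbar t ->
  is_derive (traj_area gamma) t (RInt (fun u => kappa gamma t u * gfac gamma t u) 0 (2 * PI)).
Proof.
  intros Hf Ht.
  assert (HPI : 0 < 2 * PI) by (pose proof PI_RGT_0; lra).
  assert (H0 : Rbar_lt 0 tbar) by (destruct Ht as [Ht1 Ht2]; apply (Rbar_lt_le 0 t); [lra|exact Ht2]).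
  set (Ft := fun s => RInt (Hm gamma s) 0 (2 * PI)).
  assert (Fc : forall s : R, Rbar_lt s tbar -> continuity_pt Ft s).
  { intros s Hs. apply param_cont. exact HPI.
    destruct (Rbar_lt_ball s tbar Hs) as [d Hd]. apply ball_loc. exists d.
    intros s' Hs' u _. eapply c2d_Hm; eauto. }
  destruct (Io_ball tbar t Ht) as [d Hd].
  assert (HD : is_derive (fun x => RInt Ft 0 x) t (Ft t)).
  { apply (is_derive_RInt (V := R_CompleteNormedModule) Ft (fun x => RInt Ft 0 x) 0 t).
    - apply ball_loc. exists d. intros b Hb. apply (RInt_correct (V := R_CompleteNormedModule)).
      apply (ex_RInt_continuous (V := R_CompleteNormedModule)). intros z Hz.
      apply continuity_pt_filterlim. apply Fc.
      destruct (Hd b Hb) as [Hb1 Hb2].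
      rewrite Rmin_left, Rmax_right in Hz by lra.
      apply (Rbar_lt_le z b); [lra| exact Hb2].
    - apply continuity_pt_filterlim. apply Fc. apply Ht. }
  assert (HFt : Ft t = RInt (fun u => kappa gamma t u * gfac gamma t u) 0 (2 * PI)).
  { unfold Ft. apply RInt_ext. intros u _. unfold Hm. rewrite Rmax_right by (destruct Ht; lra).
    rewrite <- (Phi_eq tbar gamma theta t u Hf (inIo_inI _ _ Ht)). apply Rmult_comm. }
  rewrite <- HFt.
  apply is_derive_ext_loc with (f := fun x => RInt Ft 0 x); [|exact HD].
  apply ball_loc. exists d. intros x Hx. destruct (Hd x Hx) as [Hx1 Hx2].
  unfold traj_area. symmetry. apply RInt_ext. intros s Hs.
  rewrite Rmin_left, Rmax_right in Hs by lra.
  unfold Ft. apply RInt_ext. intros u _. unfold Hm. rewrite Rmax_right by lra.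
  apply (Phi_eq tbar gamma theta s u Hf). split. lra. apply (Rbar_lt_le s x); [lra| exact Hx2].
Qed.

Theorem mainTheorem7 (tbar : Rbar) (gamma : R -> R -> V3) (theta : R -> R -> R) :
  framed_curvature_flow tbar gamma theta ->
  forall t : R, inIo tbar t ->
    is_derive (curve_length gamma) t
      (- RInt (fun u => kappa gamma t u * psi1 gamma theta t u * gfac gamma t u) 0 (2 * PI))
    /\
    is_derive (traj_area gamma) t
      (RInt (fun u => kappa gamma t u * gfac gamma t u) 0 (2 * PI)).
Proof.
  intros Hf t Ht. split.
  - eapply length_part; eauto.
  - eapply area_part; eauto.
Qed.
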